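(* Let $X_0^*$ be a $\{1,2,\dots\}$-valued random variable with $\mathbf P(X_0^*\ge2)>0$ and $\mathbf E(X_0^*m^{X_0^*})<\infty$, and let $X_0$ have law $(1-p)\delta_0+pP_{X_0^*}$. If $p\in[p_c,1)$, then the system $(X_n)_{n\ge0}$ is $0$-regular with coefficient $\chi=1-p$.
   Context: Fix an integer $m\ge2$. A recursive system $(X_n)_{n\ge0}$: $X_{n+1}$ has the law of $(X_{n,1}+\cdots+X_{n,m}-1)^+$ with $X_{n,i}$ independent copies of $X_n$. $p_c:=\frac{1}{1+\mathbf E\{[(m-1)X_0^*-1]m^{X_0^*}\}}$; $p\ge p_c$ is equivalent to $\mathbf E\{[(m-1)X_0-1]m^{X_0}\}\ge0$. Regularity: for a $\mathbb Z_+$-valued random variable $\zeta$ with $\mathbf E(\zeta m^\zeta)<\infty$ and $\mathbf P(\zeta\ge2)>0$, set $\Lambda(\zeta):=\mathbf E(\zeta^3m^\zeta)\in(0,\infty]$ and, for integers $k\ge1$, $\Xi_k(\zeta):=\mathbf E[(\zeta\wedge k)^2((m-1)\zeta-1)m^\zeta]$. For $\beta\in[0,2]$ and $\chi\in(0,1]$, $\zeta$ is $\beta$-regular with coefficient $\chi$ if $\Xi_k(\zeta)\ge\chi\min\{\Lambda(\zeta),k^\beta\}$ for all integers $k\ge1$; a system is $\beta$-regular with coefficient $\chi$ if its $X_0$ is. *)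

(* Defs.v *)
(* classical reals. A Z_+-valued random variable is represented
   by its law r : nat -> R (r k = P(zeta = k)); expectations are series. *)
From Stdlib Require Import Reals.
Open Scope R_scope.

Definition is_law (r : nat -> R) : Prop :=
  (forall k, 0 <= r k) /\ infinite_sum r 1.

Definition summable (f : nat -> R) : Prop := exists l, infinite_sum f l.

Definition Em_terms (m : nat) (r : nat -> R) (k : nat) : R :=
  INR k * INR m ^ k * r k.

Definition crit_terms (m : nat) (r : nat -> R) (k : nat) : R :=
  ((INR m - 1) * INR k - 1) * INR m ^ k * r k.

Definition Lambda_terms (m : nat) (r : nat -> R) (k : nat) : R :=
  INR k ^ 3 * INR m ^ k * r k.

Definition Xi_terms (m : nat) (r : nat -> R) (K : nat) (k : nat) : R :=
  INR (Nat.min k K) ^ 2 * ((INR m - 1) * INR k - 1) * INR m ^ k * r k.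

(* zeta (with law r) is beta-regular with coefficient chi:
   the standing requirements E(zeta m^zeta) < oo, P(zeta >= 2) > 0,
   beta in [0,2], chi in (0,1], and for every integer K >= 1,
   Xi_K(zeta) (a convergent series) is >= chi * min{Lambda(zeta), K^beta},
   where Lambda(zeta) = +oo when its series diverges. *)
Definition beta_regular (m : nat) (beta chi : R) (r : nat -> R) : Prop :=
  summable (Em_terms m r) /\
  (exists k, (2 <= k)%nat /\ 0 < r k) /\
  0 <= beta <= 2 /\ 0 < chi <= 1 /\
  forall K : nat, (1 <= K)%nat ->
    exists Xi, infinite_sum (Xi_terms m r K) Xi /\
      (forall L, infinite_sum (Lambda_terms m r) L ->
         chi * Rmin L (Rpower (INR K) beta) <= Xi) /\
      (~ summable (Lambda_terms m r) ->
         chi * Rpower (INR K) beta <= Xi).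

Definition mix_law (p : R) (q : nat -> R) (k : nat) : R :=
  match k with
  | O => (1 - p) + p * q O
  | S _ => p * q k
  end.

(* Main.v *)
Require Import Defs.
From Stdlib Require Import Reals Lra Lia.
From Coquelicot Require Import Coquelicot.
Open Scope R_scope.

Lemma summable_ex a : summable a <-> ex_series a.
Proof.
  split; intros [l Hl]; exists l; apply is_series_Reals; auto.
Qed.

Lemma ex_series_scalR (c : R) a : ex_series a -> ex_series (fun n => c * a n).
Proof. intro H. exact (ex_series_scal c a H). Qed.

Theorem lemma2p1 (m : nat) (hm : (2 <= m)%nat) (q : nat -> R)
  (hq : is_law q) (hq0 : q O = 0)
  (hq2 : exists k, (2 <= k)%nat /\ 0 < q k)
  (hqm : summable (Em_terms m q))
  (E : R) (hE : infinite_sum (crit_terms m q) E)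
  (p : R) (hpc : 1 / (1 + E) <= p) (hp1 : p < 1) :
  beta_regular m 0 (1 - p) (mix_law p q).
Proof.
  destruct hq as [hqpos _].
  assert (Hm : 2 <= INR m) by (apply (le_INR 2); lia).
  assert (Hmk : forall k, 0 < INR m ^ k) by (intro; apply pow_lt; lra).
  assert (HE' : is_series (crit_terms m q) E) by (apply is_series_Reals; auto).
  assert (Hcrit : forall k, 0 <= crit_terms m q k).
  { intro k; unfold crit_terms; destruct k as [|k].
    - rewrite hq0; lra.
    - assert (1 <= INR (S k)) by (apply (le_INR 1); lia).
      apply Rmult_le_pos; [apply Rmult_le_pos|]; auto; [|left; auto]. nra. }
  assert (HE0 : 0 <= E).
  { assert (H := Series_le (fun n => 0 * crit_terms m q n) (crit_terms m q)).
    rewrite Series_scal_l in H. rewrite (is_series_unique _ _ HE') in H.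
    assert (0 * E <= E); [|lra].
    apply H; [intro n; specialize (Hcrit n); lra | eexists; eauto]. }
  assert (Hp1 : 1 <= p * (1 + E)).
  { assert (0 < 1 + E) by lra.
    apply Rmult_le_compat_r with (r := 1 + E) in hpc; [|lra].
    unfold Rdiv in hpc; rewrite Rmult_1_l, Rinv_l in hpc; lra. }
  assert (Hp0 : 0 < p) by nra.
  apply summable_ex in hqm.
  split; [|split; [|split; [lra|split; [lra|]]]].
  - apply summable_ex.
    apply ex_series_ext with (a := fun k => p * Em_terms m q k).
    + intro k; unfold Em_terms, mix_law; destruct k; simpl; [rewrite hq0|]; ring.
    + apply ex_series_scalR; auto.
  - destruct hq2 as [k [Hk Hqk]]; exists k; split; auto.
    unfold mix_law; destruct k; [lia|]; nra.
  - intros K HK.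
    assert (HK1 : 1 <= INR K) by (apply (le_INR 1); lia).
    rewrite Rpower_O by lra.
    assert (Hb : forall k, p * crit_terms m q k <= Xi_terms m (mix_law p q) K k
              /\ Xi_terms m (mix_law p q) K k <= (INR K ^ 2 * (INR m - 1) * p) * Em_terms m q k).
    { intro k; unfold Xi_terms, crit_terms, Em_terms, mix_law; destruct k as [|k].
      - rewrite hq0; simpl; split; lra.
      - assert (Hk1 : 1 <= INR (S k)) by (apply (le_INR 1); lia).
        assert (Hc1 : 1 <= INR (Nat.min (S k) K)) by (apply (le_INR 1); lia).
        assert (HcK : INR (Nat.min (S k) K) <= INR K) by (apply le_INR; lia).
        set (c := INR (Nat.min (S k) K)) in *.
        set (x := INR (S k)) in *.
        set (a := INR m) in *.
        assert (HA : 0 <= a ^ S k * q (S k)) by (apply Rmult_le_pos; [left; auto | auto]).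
        set (A := a ^ S k * q (S k)) in *.
        assert (Ht : 0 <= ((a - 1) * x - 1) * A * p).
        { apply Rmult_le_pos; [apply Rmult_le_pos|]; [nra|auto|lra]. }
        assert (Hc2 : 1 <= c ^ 2) by nra.
        assert (HcK2 : c ^ 2 <= INR K ^ 2) by nra.
        split.
        + replace (c ^ 2 * ((a - 1) * x - 1) * a ^ S k * (p * q (S k)))
            with (c ^ 2 * (((a - 1) * x - 1) * A * p)) by (unfold A; ring).
          replace (p * (((a - 1) * x - 1) * a ^ S k * q (S k)))
            with (((a - 1) * x - 1) * A * p) by (unfold A; ring). nra.
        + replace (c ^ 2 * ((a - 1) * x - 1) * a ^ S k * (p * q (S k)))
            with (c ^ 2 * (((a - 1) * x - 1) * A * p)) by (unfold A; ring).
          replace (INR K ^ 2 * (a - 1) * p * (x * a ^ S k * q (S k)))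
            with (INR K ^ 2 * ((a - 1) * x * A * p)) by (unfold A; ring).
          assert (((a - 1) * x - 1) * A * p <= (a - 1) * x * A * p) by nra.
          apply Rle_trans with (INR K ^ 2 * (((a - 1) * x - 1) * A * p)); nra. }
    assert (Hex : ex_series (Xi_terms m (mix_law p q) K)).
    { apply (ex_series_le (K := R_AbsRing) (V := R_CompleteNormedModule)) with
        (b := fun k => (INR K ^ 2 * (INR m - 1) * p) * Em_terms m q k).
      - intro k; destruct (Hb k) as [H1 H2]; specialize (Hcrit k).
        change norm with Rabs; simpl. rewrite Rabs_pos_eq; nra.
      - apply ex_series_scalR; auto. }
    exists (Series (Xi_terms m (mix_law p q) K)).
    assert (HXi : p * E <= Series (Xi_terms m (mix_law p q) K)).
    { rewrite <- (is_series_unique _ _ HE'), <- Series_scal_l.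
      apply Series_le; auto.
      intro k; destruct (Hb k); specialize (Hcrit k); nra. }
    split; [apply is_series_Reals, Series_correct; auto|split].
    + intros L _. assert (Rmin L 1 <= 1) by apply Rmin_r. nra.
    + intros _. nra.
Qed.
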